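(* Let $v=[q;w_1,\ldots,w_n]$ be a WVG and let $v'$ be obtained by splitting player $i$ into two sub-players $i',i''$ with nonnegative weights $w_{i'}+w_{i''}=w_i$. Then $\eta_{i'}(v')+\eta_{i''}(v')=2\eta_i(v)$, and for every player $x\neq i$, $\eta_x(v)\le \eta_x(v')$.
   Context: A weighted voting game (WVG) $v=[q;w_1,\ldots,w_n]$ has player set $N=\{1,\ldots,n\}$, nonnegative weights $w_j$ and quota $q$ with $0<q\le \sum_j w_j$; a coalition $S\subseteq N$ is winning iff $\sum_{j\in S}w_j\ge q$. Player $j$ is critical in a coalition $S$ if $S$ is winning and $S\setminus\{j\}$ is losing; $\eta_j(v)$ is the number of coalitions in which $j$ is critical. Splitting player $i$ into sub-players with nonnegative weights summing to $w_i$ produces the WVG with the same quota in which $i$ is replaced by the sub-players and all other players keep their weights. *)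

(* Defs.v *)
From HB Require Import structures.
From mathcomp Require Import all_boot all_order all_algebra.
Set Implicit Arguments. Unset Strict Implicit. Unset Printing Implicit Defensive.
Import Order.TTheory GRing.Theory Num.Theory.
Local Open Scope ring_scope.

Section WVG.
Variable R : realDomainType.

Definition is_wvg (n : nat) (q : R) (w : 'I_n -> R) : Prop :=
  (forall j, 0 <= w j) /\ 0 < q /\ q <= \sum_(j < n) w j.

Definition winning (n : nat) (q : R) (w : 'I_n -> R) (S : {set 'I_n}) : bool :=
  q <= \sum_(j in S) w j.

Definition critical (n : nat) (q : R) (w : 'I_n -> R) (j : 'I_n)
    (S : {set 'I_n}) : bool :=
  winning q w S && ~~ winning q w (S :\ j).

Definition eta_wvg (n : nat) (q : R) (w : 'I_n -> R) (j : 'I_n) : nat :=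
  #|[set S : {set 'I_n} | critical q w j S]|.

(* Splitting player i into two sub-players with weights a and b:
   the new game has players 'I_n.+1; sub-player i' is lift ord_max i
   (same index as i) with weight a, sub-player i'' is the new player
   ord_max with weight b; every other player j is lift ord_max j and
   keeps weight w j. *)
Definition split_weights (n : nat) (w : 'I_n -> R) (i : 'I_n) (a b : R)
    : 'I_n.+1 -> R :=
  fun k => match unlift ord_max k with
           | Some j => if j == i then a else w j
           | None => b
           end.
End WVG.

(* Main.v *)
Require Import Defs.
From HB Require Import structures.
From mathcomp Require Import all_boot all_order all_algebra.
Import Order.TTheory GRing.Theory Num.Theory.
Local Open Scope ring_scope.

Section Aux.
Variable R : realDomainType.
Variable n : nat.
Variables (q : R) (w : 'I_n -> R) (i : 'I_n) (a b : R).

Local Notation w' := (split_weights w i a b).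
Local Notation om := (@ord_max n).

Definition mk (S : {set 'I_n}) (c1 c2 : bool) : {set 'I_n.+1} :=
  [set k | match unlift om k with Some j => if j == i then c1 else j \in S
           | None => c2 end].

Lemma lift_max_widen (j : 'I_n) : lift om j = widen_ord (leqnSn n) j.
Proof. by apply: val_inj; rewrite /= /bump leqNgt ltn_ord. Qed.

Lemma mk_lift S c1 c2 j :
  (lift om j \in mk S c1 c2) = if j == i then c1 else j \in S.
Proof. by rewrite inE liftK. Qed.

Lemma mk_om S c1 c2 : (om \in mk S c1 c2) = c2.
Proof. by rewrite inE unlift_none. Qed.

Lemma w'_lift j : w' (lift om j) = if j == i then a else w j.
Proof. by rewrite /split_weights liftK. Qed.

Lemma w'_om : w' om = b.
Proof. by rewrite /split_weights unlift_none. Qed.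

Lemma sum_mk S c1 c2 :
  \sum_(k in mk S c1 c2) w' k =
  (if c1 then a else 0) + (if c2 then b else 0) + \sum_(j in S :\ i) w j.
Proof.
rewrite big_mkcond big_ord_recr /= mk_om w'_om.
under eq_bigr => j _ do rewrite -lift_max_widen mk_lift w'_lift.
rewrite (bigD1 i) //= eqxx.
rewrite [\sum_(j in S :\ i) w j]big_mkcond /=.
rewrite [\sum_j (if j \in S :\ i then _ else _)](bigD1 i) //= !inE eqxx /=.
rewrite add0r.
have -> : \sum_(j < n | j != i) (if j \in S :\ i then w j else 0) =
          \sum_(j < n | j != i)
            (if (if j == i then c1 else j \in S) then if j == i then a else w j else 0).
  by apply: eq_bigr => j ji; rewrite !inE (negbTE ji).
by rewrite addrAC.
Qed.

Lemma critical_in (m : nat) (w0 : 'I_m -> R) j S :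
  critical q w0 j S = (j \in S) && critical q w0 j S.
Proof.
case jS: (j \in S) => //=; rewrite /critical.
have -> : S :\ j = S by apply/setP => k; rewrite !inE; case: eqP => // ->; rewrite jS.
by rewrite andbN.
Qed.

Lemma crit_notin (m : nat) (w0 : 'I_m -> R) j (S : {set 'I_m}) :
  j \notin S -> critical q w0 j S = false.
Proof. by move=> /negbTE jS; rewrite critical_in jS. Qed.

Lemma mk_D1_lift S c1 c2 : mk S c1 c2 :\ lift om i = mk S false c2.
Proof.
apply/setP => k; rewrite !inE; case: (unliftP om k) => [j ->|->].
  by rewrite (inj_eq (@lift_inj _ om)); case: eqP.
by rewrite neq_lift.
Qed.

Lemma mk_D1_om S c1 c2 : mk S c1 c2 :\ om = mk S c1 false.
Proof.
apply/setP => k; rewrite !inE; case: (unliftP om k) => [j ->|->].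
  by rewrite eq_sym neq_lift.
by rewrite eqxx.
Qed.

Lemma card_sum (T : finType) (P : pred T) :
  #|[set x | P x]| = (\sum_x (P x : nat))%N.
Proof.
rewrite -sum1_card big_mkcond /=; apply: eq_bigr => x _; rewrite inE.
by case: (P x).
Qed.

Lemma boolcount (p0 pa pb pab : bool) :
  (p0 ==> pa) -> (p0 ==> pb) -> (pa ==> pab) -> (pb ==> pab) ->
  ((pab && ~~ pb) + (pa && ~~ p0) + ((pab && ~~ pa) + (pb && ~~ p0)) =
   2 * (pab && ~~ p0))%N.
Proof. by case: p0; case: pa; case: pb; case: pab. Qed.

Lemma pre_mk S c : [set j : 'I_n | lift om j \in mk S (i \in S) c] = S.
Proof. by apply/setP => j; rewrite inE mk_lift; case: eqP => // ->. Qed.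

Lemma h1_bij : bijective (fun p : {set 'I_n} * bool => mk p.1 (i \in p.1) p.2).
Proof.
exists (fun T : {set 'I_n.+1} => ([set j : 'I_n | lift om j \in T], om \in T)).
  by case=> S c /=; rewrite pre_mk mk_om.
move=> T /=; apply/setP => k; case: (unliftP om k) => [j ->|->].
  by rewrite mk_lift !inE; case: eqP => // ->.
by rewrite mk_om.
Qed.

Lemma h2_bij : bijective (fun p : {set 'I_n} * bool => mk p.1 p.2 (i \in p.1)).
Proof.
exists (fun T : {set 'I_n.+1} => ([set j : 'I_n | if j == i then om \in T else lift om j \in T], lift om i \in T)).
  case=> S c /=; rewrite mk_lift eqxx; congr pair.
  by apply/setP => j; rewrite inE mk_om mk_lift; case: eqP => // ->.
move=> T /=; apply/setP => k; case: (unliftP om k) => [j ->|->].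
  by rewrite mk_lift !inE; case: eqP => // ->.
by rewrite mk_om inE eqxx.
Qed.

Lemma sum_f S : a + b = w i ->
  \sum_(k in mk S (i \in S) (i \in S)) w' k = \sum_(j in S) w j.
Proof.
move=> Hab; rewrite sum_mk; case iS: (i \in S).
  by rewrite (big_setD1 _ iS) Hab.
have -> : S :\ i = S.
  by apply/setP => k; rewrite !inE; case: eqP => // ->; rewrite iS.
by rewrite !add0r.
Qed.

Lemma fD1 S x : x != i ->
  mk S (i \in S) (i \in S) :\ lift om x = mk (S :\ x) (i \in S :\ x) (i \in S :\ x).
Proof.
move=> xi; apply/setP => k; rewrite !inE; case: (unliftP om k) => [j ->|->].
  rewrite (inj_eq (@lift_inj _ om)) !inE.
  by case: (j =P i) => [->|].
by rewrite neq_lift eq_sym xi.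
Qed.

Lemma f_inj : injective (fun S => mk S (i \in S) (i \in S)).
Proof. by move=> S1 S2 /= E; rewrite -(pre_mk S1 (i \in S1)) E pre_mk. Qed.

End Aux.

Theorem mainTheorem2 (R : realDomainType) (n : nat) (q : R) (w : 'I_n -> R)
    (i : 'I_n) (a b : R) :
  is_wvg q w -> 0 <= a -> 0 <= b -> a + b = w i ->
  (eta_wvg q (split_weights w i a b) (lift ord_max i)
     + eta_wvg q (split_weights w i a b) ord_max = 2 * eta_wvg q w i)%N /\
  (forall x : 'I_n, x != i ->
     (eta_wvg q w x <= eta_wvg q (split_weights w i a b) (lift ord_max x))%N).
Proof.
move=> _ a0 b0 Hab; split.
  rewrite /eta_wvg !card_sum.
  rewrite (reindex (fun p : {set 'I_n} * bool => mk n i p.1 (i \in p.1) p.2) (onW_bij _ (h1_bij n i))) /=.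
  rewrite [X in (_ + X)%N](reindex (fun p : {set 'I_n} * bool => mk n i p.1 p.2 (i \in p.1)) (onW_bij _ (h2_bij n i))) /=.
  rewrite -(pair_bigA _ (fun S c => (critical q (split_weights w i a b) (lift ord_max i) (mk n i S (i \in S) c) : nat))).
  rewrite -(pair_bigA _ (fun S c => (critical q (split_weights w i a b) ord_max (mk n i S c (i \in S)) : nat))).
  rewrite /= -big_split big_distrr /=; apply: eq_bigr => S _.
  rewrite !big_bool /=.
  case iS: (i \in S); last first.
    rewrite !crit_notin //; by rewrite ?mk_lift ?mk_om ?eqxx ?iS.
  rewrite /critical /winning !mk_D1_lift !mk_D1_om !sum_mk (big_setD1 _ iS) /=.
  rewrite ?addr0 ?add0r -Hab.
  set W := \sum_(j in S :\ i) w j.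
  apply: boolcount; apply/implyP => h; apply: le_trans h _.
  - by rewrite lerDr.
  - by rewrite lerDr.
  - by rewrite lerD2r lerDl.
  - by rewrite lerD2r lerDr.
move=> x xi.
rewrite /eta_wvg -(card_imset _ (f_inj n i)); apply: subset_leq_card.
apply/subsetP => T /imsetP [S]; rewrite inE => cS ->; rewrite inE.
move: cS; rewrite /critical /winning fD1 // !sum_f //.
Qed.
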